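(* Let $A\in\mathbb{R}^{m\times n}_{\geq 0}$ be a matrix each of whose columns has at least one positive entry, and consider the covering LP $\min_{x\geq 0}\{\vec{1}^Tx : Ax\geq \vec{1}\}$ with optimal value $\mathrm{OPT}$. For each $i\in[n]$ let $a_i=\min_j\{A_{ji}:A_{ji}>0\}$, $r_i=\max_j\{A_{ji}:A_{ji}>0\}/a_i$, and $n_i=\max\{1,\lceil \log_2 r_i\rceil\}$. Define a new matrix $\bar{A}\in\mathbb{R}^{m\times(\sum_i n_i)}_{\geq 0}$ whose columns are indexed by pairs $(i,l)$ with $i\in[n]$, $l\in[n_i]$, by $$\bar{A}_{j,(i,l)}=\min\{A_{ji},\,2^l a_i\}.$$ Let $\overline{\mathrm{OPT}}$ be the optimal value of the LP $$\min\Big\{\sum_{i,l}\bar{x}_{(i,l)} \;:\; \bar{A}\bar{x}\geq\vec{1},\ \bar{x}\geq 0,\ \bar{x}_{(i,l)}\leq \frac{2}{2^l a_i}\ \text{for all } i\in[n],\ l\in[n_i]\Big\}.$$ Then $\mathrm{OPT}=\overline{\mathrm{OPT}}$.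
   Context: $\vec{1}$ denotes the all-ones vector. The new LP is obtained by duplicating column $i$ of $A$ $n_i$ times, capping the coefficients of the $l$-th copy at $2^l a_i$, and imposing an upper bound on each copied variable. *)

(* Defs.v *)
From HB Require Import structures.
From mathcomp Require Import all_boot all_order all_algebra.
From mathcomp Require Import all_classical all_reals.
From mathcomp Require Import ereal exp.
Set Implicit Arguments. Unset Strict Implicit. Unset Printing Implicit Defensive.
Import Order.TTheory GRing.Theory Num.Theory.
Local Open Scope ring_scope.
Local Open Scope classical_set_scope.

Section Defs.
Variables (R : realType) (m n : nat).
Implicit Types (A : 'M[R]_(m, n)).

Definition colmax A (i : 'I_n) : R :=
  \big[Num.max/0]_(j < m | 0 < A j i) A j i.
Definition amin A (i : 'I_n) : R :=
  \big[Num.min/colmax A i]_(j < m | 0 < A j i) A j i.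
Definition ratio A (i : 'I_n) : R := colmax A i / amin A i.
Definition ncopies A (i : 'I_n) : nat :=
  `| Num.max 1%Z (Num.ceil (ln (ratio A i) / ln 2)) |%N.

(* column index type of Abar: pairs (i,l), i in [n], l in [n_i];
   the ordinal l : 'I_(n_i) stands for the copy number l+1 *)
Definition col_idx A := {i : 'I_n & 'I_(ncopies A i)}.

Definition copy_no A (c : col_idx A) : nat := (val (tagged c)).+1.

Definition Abar A (j : 'I_m) (c : col_idx A) : R :=
  Num.min (A j (tag c)) (2 ^+ copy_no c * amin A (tag c)).

Definition cover_feasible A (x : 'I_n -> R) : Prop :=
  (forall i, 0 <= x i) /\ (forall j, 1 <= \sum_i A j i * x i).

Definition OPT A : \bar R :=
  ereal_inf ((fun x : 'I_n -> R => ((\sum_i x i)%:E)%E) @` @cover_feasible A).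

Definition bar_feasible A (x : col_idx A -> R) : Prop :=
  [/\ (forall j, 1 <= \sum_c @Abar A j c * x c),
      (forall c, 0 <= x c) &
      (forall c, x c <= 2 / (2 ^+ @copy_no A c * amin A (tag c)))].

Definition OPTbar A : \bar R :=
  ereal_inf ((fun x : col_idx A -> R => ((\sum_c x c)%:E)%E) @` @bar_feasible A).

End Defs.
Arguments Abar {R m n} A j c.

(* Main.v *)
Require Import Defs.
From HB Require Import structures.
From mathcomp Require Import all_boot all_order all_algebra.
From mathcomp Require Import all_classical all_reals.
From mathcomp Require Import ereal exp.
Import Order.TTheory GRing.Theory Num.Theory.
Local Open Scope ring_scope.
Set Implicit Arguments. Unset Strict Implicit.

Lemma colmax_ge (R : realType) m n (A : 'M[R]_(m, n)) j i :
  0 < A j i -> A j i <= colmax A i.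
Proof. by move=> h; rewrite /colmax; exact: (@le_bigmax_cond _ _ _ 0 j (fun j => 0 < A j i) (fun j => A j i) h). Qed.

Lemma amin_le (R : realType) m n (A : 'M[R]_(m, n)) j i :
  0 < A j i -> amin A i <= A j i.
Proof. by move=> h; rewrite /amin; exact: (@bigmin_le_cond _ _ _ (colmax A i) j (fun j => 0 < A j i) (fun j => A j i) h). Qed.

Lemma amin_gt0 (R : realType) m n (A : 'M[R]_(m, n)) i :
  (exists j, 0 < A j i) -> 0 < amin A i.
Proof.
case=> j hj; rewrite /amin; apply: (big_ind (fun x => 0 < x)).
- exact: lt_le_trans hj (colmax_ge hj).
- by move=> x y hx hy; rewrite lt_min hx hy.
- by [].
Qed.

Lemma ncopies_gt0 (R : realType) m n (A : 'M[R]_(m, n)) i :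
  (0 < ncopies A i)%N.
Proof.
rewrite /ncopies; set z := Num.max _ _.
have h : (1 <= z)%R by rewrite le_max lexx.
have h0 : (0 <= z)%R by apply: le_trans h.
rewrite -(ltz_nat 0) gez0_abs //; exact: lt_le_trans h.
Qed.

Lemma colmax_le (R : realType) m n (A : 'M[R]_(m, n)) i :
  (exists j, 0 < A j i) -> colmax A i <= 2 ^+ ncopies A i * amin A i.
Proof.
move=> hj; have ha := amin_gt0 hj.
case: hj => j hj.
have hc : 0 < colmax A i by exact: lt_le_trans hj (colmax_ge hj).
have hr : 0 < Defs.ratio A i by rewrite /Defs.ratio divr_gt0.
have hl2 : 0 < ln (2 : R) by apply: ln_gt0; rewrite ltr1n.
set N := ncopies A i.
have hN : ln (Defs.ratio A i) / ln 2 <= N%:R.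
  rewrite /N /ncopies.
  set z := Num.max _ _.
  have h : (1 <= z)%R by rewrite le_max lexx.
  have h0 : (0 <= z)%R by apply: le_trans h.
  have -> : (`|z|%N)%:R = z%:~R :> R by rewrite -[in RHS](gez0_abs h0).
  apply: le_trans (ceil_ge _) _; rewrite ler_int /z le_max lexx orbT //.
have : ln (Defs.ratio A i) <= ln (2 ^+ N : R).
  rewrite lnXn ?ltr0n //; apply: (@le_trans _ _ (N%:R * ln 2)).
    by rewrite -ler_pdivrMr.
  by rewrite mulr_natl.
rewrite ler_ln ?posrE ?exprn_gt0 ?ltr0n // /Defs.ratio ler_pdivrMr //.
Qed.

Lemma sum_col (R : realType) m n (A : 'M[R]_(m, n)) (F : col_idx A -> R) :
  \sum_c F c = \sum_i \sum_(l : 'I_(ncopies A i)) F (Tagged (fun i => 'I_(ncopies A i)) l).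
Proof.
rewrite (@sig_big_dep _ _ _ _ (fun i => 'I_(ncopies A i)) (fun _ => true) (fun _ _ => true) (fun i l => F (Tagged (fun i => 'I_(ncopies A i)) l))) /=.
by apply: eq_bigr => -[].
Qed.

Lemma dir1 (R : realType) m n (A : 'M[R]_(m, n)) (hA0 : forall j i, 0 <= A j i) :
  (OPT A <= OPTbar A)%E.
Proof.
apply/ereal_infP => _ [xb [hrow hge hub] <-].
apply: ge_ereal_inf.
pose x i := \sum_(l : 'I_(ncopies A i)) xb (Tagged (fun i => 'I_(ncopies A i)) l).
exists (\sum_i x i)%:E; last by rewrite sum_col.
exists x => //; split.
- by move=> i; apply: sumr_ge0 => l _; apply: hge.
- move=> j; apply: le_trans (hrow j) _.
  rewrite sum_col; apply: ler_sum => i _; rewrite /x mulr_sumr; apply: ler_sum => l _.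
  apply: ler_wpM2r; first exact: hge.
  by rewrite /Abar ge_min lexx.
Qed.

Lemma dir2 (R : realType) m n (A : 'M[R]_(m, n)) (hA0 : forall j i, 0 <= A j i)
  (hcol : forall i, exists j, 0 < A j i) :
  (OPTbar A <= OPT A)%E.
Proof.
apply/ereal_infP => _ [x [hx0 hrow] <-].
apply: ge_ereal_inf.
have ha i : 0 < amin A i := amin_gt0 (hcol i).
pose y i := Num.min (x i) (amin A i)^-1.
have hy0 i : 0 <= y i by rewrite le_min hx0 invr_ge0 ltW.
pose P i (k : 'I_(ncopies A i)) := 2 ^+ k * amin A i * y i <= 1.
pose k0 i := Ordinal (ncopies_gt0 A i).
have P0 i : P i (k0 i).
  rewrite /P /= expr0 mul1r.
  have : amin A i * y i <= amin A i * (amin A i)^-1.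
    by apply: ler_wpM2l; [exact: ltW | rewrite /y ge_min lexx orbT].
  by rewrite mulfV ?gt_eqF.
pose K i := [arg max_(k > k0 i | P i k) (k : nat)].
have HK i : P i (K i) /\ forall k, P i k -> (k <= K i)%N.
  rewrite /K; case: (arg_maxnP (fun k : 'I_(ncopies A i) => (k : nat)) (P0 i)) => k hk hmax.
  by split.
pose xb (c : col_idx A) := if tagged c == K (tag c) then y (tag c) else 0.
have hsum i : \sum_(l : 'I_(ncopies A i)) xb (Tagged (fun i => 'I_(ncopies A i)) l) = y i.
  by rewrite /xb /= -big_mkcond big_pred1_eq.
exists (\sum_c xb c)%:E; last first.
  by rewrite lee_fin sum_col; apply: ler_sum => i _; rewrite hsum /y ge_min lexx.
exists xb => //; split.
- move=> j.
  pose u i := Abar A j (Tagged (fun i => 'I_(ncopies A i)) (K i)) * y i.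
  rewrite sum_col.
  have -> : \sum_i \sum_(l : 'I_(ncopies A i)) Abar A j (Tagged (fun i => 'I_(ncopies A i)) l) * xb (Tagged (fun i => 'I_(ncopies A i)) l) = \sum_i u i.
    apply: eq_bigr => i _; rewrite (bigD1 (K i)) //= big1 ?addr0; first by rewrite /xb /= eqxx.
    by move=> l hl; rewrite /xb /= (negbTE hl) mulr0.
  have hu0 i : 0 <= u i.
    by rewrite /u /Abar mulr_ge0 // le_min hA0 mulr_ge0 ?exprn_ge0 // ltW.
  have hu i : Num.min 1 (A j i * x i) <= u i.
    have := hA0 j i; rewrite le_eqVlt => /orP [/eqP h0 | hpos].
      by rewrite -h0 mul0r ge_min hu0 orbT.
    rewrite /u /Abar /copy_no /=.
    case: (leP (A j i) (2 ^+ (K i).+1 * amin A i)) => hle.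
      rewrite /y.
      case: (leP (x i) (amin A i)^-1) => hx.
        by rewrite ?(min_l hx) ge_min lexx orbT.
      rewrite ?(min_r (ltW hx)) ge_min; apply/orP; left.
      by rewrite ler_pdivlMr // mul1r amin_le.
    rewrite ?(min_r (ltW hle)).
    have hlt : ((K i).+1 < ncopies A i)%N.
      rewrite ltnNge; apply/negP => hN.
      have h1 : 2 ^+ ncopies A i * amin A i <= 2 ^+ (K i).+1 * amin A i.
        by apply: ler_wpM2r; [exact: ltW | rewrite ler_eXn2l ?ltr1n].
      have := lt_le_trans (le_lt_trans h1 hle) (le_trans (colmax_ge hpos) (colmax_le (hcol i))).
      by rewrite ltxx.
    have : ~~ P i (Ordinal hlt).
      apply/negP => Pk; have := (HK i).2 _ Pk; by rewrite /= ltnn.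
    rewrite /P -ltNge /= => h.
    by rewrite ge_min (ltW h).
  case: (boolP [exists i, 1 <= A j i * x i]).
    move/existsP => [i hi].
    apply: (@le_trans _ _ (u i)).
      by apply: le_trans (hu i); rewrite le_min lexx hi.
    by rewrite (bigD1 i) //= ler_wpDr // sumr_ge0.
  rewrite negb_exists => /forallP hall.
  apply: le_trans (hrow j) _; apply: ler_sum => i _; apply: le_trans (hu i).
  have := hall i; rewrite -ltNge => h.
  by rewrite le_min (ltW h) lexx.
- by move=> c; rewrite /xb; case: ifP.
- move=> [i l]; rewrite /xb /=; case: (l =P K i) => [->|_].
    have := (HK i).1; rewrite /P => h.
    rewrite /copy_no /= ler_pdivlMr ?mulr_gt0 ?exprn_gt0 // exprS.
    rewrite [X in X <= _](_ : _ = 2 * (2 ^+ K i * amin A i * y i)); last first.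
      by rewrite mulrC !mulrA.
    by rewrite -[X in _ <= X]mulr1 ler_wpM2l.
  by rewrite divr_ge0 // ltW // mulr_gt0 ?exprn_gt0.
Qed.

Theorem lemma1 (R : realType) (m n : nat) (A : 'M[R]_(m, n))
  (hA0 : forall j i, 0 <= A j i)
  (hcol : forall i, exists j, 0 < A j i) :
  OPT A = OPTbar A.
Proof.
by apply/eqP; rewrite eq_le dir1 // dir2.
Qed.
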